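(* Let $f:\mathbb{N}\to\mathbb{R}$ with $f(1)=1$ be multiplicative (i.e. $f(mn)=f(m)f(n)$ for coprime $m,n$), and suppose $f(p^k)=0$ for every prime $p$ and every integer $k\geq 2$. Assume there exist $C>0$ and $\gamma\in\mathbb{R}$ such that $|f(n)|\leq Cn^\gamma$ for all $n\geq2$. Then $$|f^{-1}(n)| \leq C^{\Omega(n)} n^{\gamma}, \quad n\geq2.$$
   Context: $f^{-1}$ denotes the Dirichlet inverse of $f$: the arithmetic function with $\sum_{d\mid n} f(n/d) f^{-1}(d)=\varepsilon(n)$ for all $n$, where $\varepsilon(1)=1$ and $\varepsilon(n)=0$ for $n\ge2$. $\Omega(n)$ is the number of prime factors of $n$ counted with multiplicity. *)

(* Defs.v *)
From HB Require Import structures.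
From mathcomp Require Import all_boot all_order all_algebra.
From mathcomp Require Import reals exp.
Set Implicit Arguments. Unset Strict Implicit. Unset Printing Implicit Defensive.
Import Order.TTheory GRing.Theory Num.Theory.
Local Open Scope ring_scope.

Definition bigOmega (n : nat) : nat := (\sum_(p <- primes n) logn p n)%N.

(* Arithmetic functions are f : nat -> R; only positive arguments matter. *)
Definition arith_multiplicative (R : realType) (f : nat -> R) : Prop :=
  f 1%N = 1 /\
  forall m n : nat, (0 < m)%N -> (0 < n)%N -> coprime m n -> f (m * n)%N = f m * f n.

Definition dirichlet_inverse (R : realType) (f g : nat -> R) : Prop :=
  forall n : nat, (0 < n)%N ->
    \sum_(d <- divisors n) f (n %/ d)%N * g d = (n == 1%N)%:R.

(* Main.v *)
Require Import Defs.
From HB Require Import structures.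
From mathcomp Require Import all_boot all_order all_algebra.
From mathcomp Require Import reals exp.
From mathcomp Require Import ring lra zify.
Import Order.TTheory GRing.Theory Num.Theory.
Local Open Scope ring_scope.

Local Open Scope nat_scope.
Lemma divisorsM a b : (0 < a)%N -> (0 < b)%N -> coprime a b ->
  perm_eq (divisors (a * b)) [seq (d1 * d2)%N | d1 <- divisors a, d2 <- divisors b].
Proof.
move=> a0 b0 cab.
have ab0 : (0 < a * b)%N by rewrite muln_gt0 a0.
apply: uniq_perm; first exact: divisors_uniq.
  apply: allpairs_uniq; try exact: divisors_uniq.
  move=> [x1 x2] [y1 y2] /allpairsP [[u1 u2] [/= Hu1 Hu2 [-> ->]]]
         /allpairsP [[v1 v2] [/= Hv1 Hv2 [-> ->]]] /= E.
  rewrite -!dvdn_divisors // in Hu1 Hu2 Hv1 Hv2.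
  have c12 : coprime u1 v2 by apply: (coprime_dvdl Hu1); apply: (coprime_dvdr Hv2).
  have c21 : coprime v1 u2 by apply: (coprime_dvdl Hv1); apply: (coprime_dvdr Hu2).
  have d1 : (u1 %| v1)%N by rewrite -(Gauss_dvdr _ c12) mulnC -E dvdn_mulr.
  have d2 : (v1 %| u1)%N by rewrite -(Gauss_dvdr _ c21) mulnC E dvdn_mulr.
  have e1 : u1 = v1 by apply/eqP; rewrite eqn_dvd d1 d2.
  have u10 : (0 < u1)%N by apply: dvdn_gt0 Hu1.
  rewrite -e1 in E *; congr (_, _); apply/eqP; by rewrite -(eqn_pmul2l u10) E.
move=> d; apply/idP/idP.
  rewrite -dvdn_divisors // => dab.
  apply/allpairsP; exists (gcdn d a, d %/ gcdn d a) => /=.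
  have g0 : (0 < gcdn d a)%N by rewrite gcdn_gt0 a0 orbT.
  split; first by rewrite -dvdn_divisors // dvdn_gcdr.
    rewrite -dvdn_divisors //.
    have : coprime (d %/ gcdn d a) (a %/ gcdn d a).
      have H : gcdn (d %/ gcdn d a) (a %/ gcdn d a) * gcdn d a = 1 * gcdn d a.
        by rewrite muln_gcdl !divnK ?dvdn_gcdl ?dvdn_gcdr ?mul1n.
      by rewrite /coprime; apply/eqP; move/eqP: H; rewrite eqn_pmul2r // => /eqP.
    move=> cop; rewrite -(Gauss_dvdr _ cop).
    rewrite -(dvdn_pmul2r g0) mulnAC (divnK (dvdn_gcdl d a)) (divnK (dvdn_gcdr d a)).
    exact: dab.

  by rewrite mulnC divnK // dvdn_gcdl.
move/allpairsP => [[u1 u2] [/= Hu1 Hu2 ->]].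
rewrite -dvdn_divisors // dvdn_mul //; by rewrite dvdn_divisors.
Qed.

Local Open Scope ring_scope.

Definition cmult (R : realType) (F : nat -> R) :=
  forall m n : nat, (0 < m)%N -> (0 < n)%N -> coprime m n -> F (m * n)%N = F m * F n.

Definition conv (R : realType) (F G : nat -> R) (n : nat) :=
  \sum_(d <- divisors n) F (n %/ d)%N * G d.
Arguments cmult {R}.
Arguments conv {R}.

Lemma convM (R : realType) (F G : nat -> R) a b : cmult F -> cmult G ->
  (0 < a)%N -> (0 < b)%N -> coprime a b ->
  conv F G (a * b)%N = conv F G a * conv F G b.
Proof.
move=> mF mG a0 b0 cab; rewrite /conv (perm_big _ (@divisorsM a b a0 b0 cab)) /=.
rewrite big_allpairs_dep /= big_distrl /=; apply: eq_big_seq => d1 Hd1.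
rewrite big_distrr /=; apply: eq_big_seq => d2 Hd2.
rewrite -dvdn_divisors // in Hd1; rewrite -dvdn_divisors // in Hd2.
have d10 : (0 < d1)%N by apply: dvdn_gt0 Hd1.
have d20 : (0 < d2)%N by apply: dvdn_gt0 Hd2.
have E : ((a * b) %/ (d1 * d2) = (a %/ d1) * (b %/ d2))%N.
  rewrite -{1}(divnK Hd1) -{1}(divnK Hd2) mulnACA mulnK //.
  by rewrite muln_gt0 d10.
have a10 : (0 < a %/ d1)%N by rewrite divn_gt0 // dvdn_leq.
have b20 : (0 < b %/ d2)%N by rewrite divn_gt0 // dvdn_leq.
have c1 : coprime d1 d2 by apply: (coprime_dvdl Hd1); apply: (coprime_dvdr Hd2).
have c2 : coprime (a %/ d1) (b %/ d2).
  by apply: (coprime_dvdl (dvdn_div Hd1)); apply: (coprime_dvdr (dvdn_div Hd2)).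
rewrite E mF // mG //; ring.
Qed.

Definition hh (R : realType) (f : nat -> R) (n : nat) :=
  \prod_(p <- primes n) (- f p) ^+ logn p n.
Arguments hh {R}.

Lemma hh_range (R : realType) (f : nat -> R) n N : (0 < n)%N -> (n < N)%N ->
  hh f n = \prod_(p < N) (- f p) ^+ logn p n.
Proof.
move=> n0 nN.
have P : perm_eq (primes n) [seq p <- index_iota 0 N | p \in primes n].
  apply: uniq_perm; first exact: primes_uniq.
    by rewrite filter_uniq // iota_uniq.
  move=> p; rewrite mem_filter mem_index_iota /=.
  case Hp: (p \in primes n) => //=; symmetry.
  move: Hp; rewrite mem_primes => /and3P [_ _ pd].
  by apply: leq_ltn_trans (dvdn_leq n0 pd) nN.
rewrite /hh (perm_big _ P) big_filter big_mkcond big_mkord /=.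
apply: eq_bigr => i _; case: ifP => // Hi.
by move: Hi; rewrite -logn_gt0 lt0n => /negbFE/eqP ->; rewrite expr0.
Qed.

Lemma hhM (R : realType) (f : nat -> R) a b : (0 < a)%N -> (0 < b)%N ->
  hh f (a * b)%N = hh f a * hh f b.
Proof.
move=> a0 b0.
have ab0 : (0 < a * b)%N by rewrite muln_gt0 a0.
rewrite !(@hh_range _ _ _ (a * b).+1) //; try (rewrite ltnS; by [apply: leq_pmull | apply: leq_pmulr]).
rewrite -big_split /=; apply: eq_bigr => i _.
by rewrite lognM // exprD.
Qed.

Lemma hh1 (R : realType) (f : nat -> R) : hh f 1 = 1.
Proof. by rewrite /hh big_nil. Qed.

Lemma hh_pow (R : realType) (f : nat -> R) p k : prime p ->
  hh f (p ^ k)%N = (- f p) ^+ k.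
Proof.
move=> pp; elim: k => [|k IH]; first by rewrite expn0 hh1 expr0.
rewrite expnS hhM ?expn_gt0 ?prime_gt0 // IH exprS; congr (_ * _).
by rewrite /hh primes_prime // big_seq1 logn_prime // eqxx expr1.
Qed.

Lemma divisors_pow p k : prime p ->
  perm_eq (divisors (p ^ k)) [seq (p ^ i)%N | i <- iota 0 k.+1].
Proof.
move=> pp; have p1 : (1 < p)%N by apply: prime_gt1.
apply: uniq_perm; first exact: divisors_uniq.
  by rewrite map_inj_uniq ?iota_uniq //; apply: expnI.
move=> d; rewrite -dvdn_divisors ?expn_gt0 ?prime_gt0 //.
apply/dvdn_pfactor/mapP => // [[m mk ->]|[m]].
  by exists m => //; rewrite mem_iota add0n ltnS.
by rewrite mem_iota add0n ltnS => /andP [_ mk] ->; exists m.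
Qed.

Lemma conv_pow (R : realType) (f : nat -> R) p k : f 1%N = 1 ->
  (forall (p k : nat), prime p -> (2 <= k)%N -> f (p ^ k)%N = 0) ->
  prime p -> (0 < k)%N -> conv f (hh f) (p ^ k)%N = 0.
Proof.
move=> f1 f0 pp; case: k => // k _.
have p0 : (0 < p)%N by apply: prime_gt0.
rewrite /conv (perm_big _ (@divisors_pow p k.+1 pp)) big_map.
rewrite -/(index_iota 0 k.+2) big_mkord.
rewrite big_ord_recr big_ord_recr /= big1; last first.
  move=> i _; rewrite -expnB // ?f0 ?mul0r //.
    by have := ltn_ord i; lia.
  by apply: leq_trans (ltnW (ltn_ord i)) _.
rewrite -!expnB // ?subnn ?subSnn expn0 expn1 f1 !hh_pow // exprS.
rewrite add0r; ring.
Qed.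

Lemma conv_eps (R : realType) (f : nat -> R) : arith_multiplicative f ->
  (forall (p k : nat), prime p -> (2 <= k)%N -> f (p ^ k)%N = 0) ->
  forall n, (0 < n)%N -> conv f (hh f) n = (n == 1%N)%:R.
Proof.
move=> [f1 fM] f0 n n0.
have [n1|n1] := leqP n 1%N.
  have -> : n = 1%N by apply/eqP; rewrite eqn_leq n1 n0.
  by rewrite /conv /= big_seq1 divnn /= f1 hh1 mulr1.
have pp := pdiv_prime n1; set p := pdiv n in pp *.
have [m cpm E] := pfactor_coprime pp n0.
have k0 : (0 < logn p n)%N.
  by rewrite logn_gt0 mem_primes pp n0 pdiv_dvd.
have m0 : (0 < m)%N by move: n0; rewrite E muln_gt0 => /andP [].
have -> : (n == 1%N) = false by apply/negbTE; rewrite neq_ltn n1 orbT.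
rewrite E convM //.
- by rewrite conv_pow // mulr0.
- move=> a b a0 b0 _; exact: hhM.
- by rewrite coprime_sym; apply: coprimeXl.
Qed.

Lemma inv_unique (R : realType) (f g finv : nat -> R) : f 1%N = 1 ->
  dirichlet_inverse f finv ->
  (forall n, (0 < n)%N -> conv f g n = (n == 1%N)%:R) ->
  forall n, (0 < n)%N -> finv n = g n.
Proof.
move=> f1 Hinv Hg; elim/ltn_ind => n IH n0.
have := Hg n n0; rewrite -(Hinv n n0) /conv.
rewrite (big_rem n (divisors_id n0)) [in RHS](big_rem n (divisors_id n0)).
rewrite divnn n0 f1 !mul1r.
have -> : \sum_(y <- rem n (divisors n)) f (n %/ y)%N * g y =
          \sum_(y <- rem n (divisors n)) f (n %/ y)%N * finv y.
  apply: eq_big_seq => d; rewrite mem_rem_uniq ?divisors_uniq //.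
  rewrite inE => /andP [dn]; rewrite -dvdn_divisors // => dd.
  have d0 : (0 < d)%N by apply: dvdn_gt0 dd.
  rewrite IH //; rewrite ltn_neqAle dn dvdn_leq //.
by move/addIr.
Qed.

Lemma powR_exprn (R : realType) (a g : R) e : 0 <= a ->
  (a ^+ e) `^ g = (a `^ g) ^+ e.
Proof.
move=> a0; elim: e => [|e IH]; first by rewrite !expr0 powR1.
by rewrite !exprS powRM ?exprn_ge0 // IH.
Qed.

Lemma powR_prod (R : realType) (I : Type) (s : seq I) (x : I -> R) g :
  (forall i, 0 <= x i) -> (\prod_(i <- s) x i) `^ g = \prod_(i <- s) (x i `^ g).
Proof.
move=> x0; elim: s => [|i s IH]; first by rewrite !big_nil powR1.
by rewrite !big_cons powRM // ?IH // prodr_ge0.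
Qed.

Lemma hh_bound (R : realType) (f : nat -> R) (C gamma : R) : 0 < C ->
  (forall n : nat, (2 <= n)%N -> `|f n| <= C * (n%:R) `^ gamma) ->
  forall n, (0 < n)%N -> `|hh f n| <= C ^+ bigOmega n * (n%:R) `^ gamma.
Proof.
move=> C0 fb n n0.
have En : (n%:R : R) = \prod_(p <- primes n) (p%:R) ^+ logn p n.
  by rewrite {1}(prod_prime_decomp n0) prime_decompE big_map natr_prod;
     apply: eq_bigr => p _; rewrite natrX.
rewrite /hh normr_prod.
apply: (le_trans (y := \prod_(p <- primes n) (C * p%:R `^ gamma) ^+ logn p n)).
  rewrite [X in X <= _]big_seq [X in _ <= X]big_seq; apply: ler_prod => p.
  rewrite mem_primes => /and3P [pp _ _].
  rewrite normrX normrN exprn_ge0 //=.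
  apply: lerXn2r; rewrite ?inE ?normr_ge0 //.
    by rewrite nnegrE mulr_ge0 ?powR_ge0 // ltW.
  by apply: fb; apply: prime_gt1.
rewrite (eq_bigr (fun p => C ^+ logn p n * (p%:R `^ gamma) ^+ logn p n));
  last by move=> p _; rewrite exprMn.
rewrite big_split /= prodrXr /bigOmega; apply: ler_wpM2l.
  by rewrite exprn_ge0 // ltW.
rewrite En powR_prod; last by move=> p; rewrite exprn_ge0.
by rewrite le_eqVlt; apply/orP; left; apply/eqP/eq_bigr => p _; rewrite powR_exprn.
Qed.

Theorem proposition3p5 (R : realType) (f finv : nat -> R) (C gamma : R) :
  arith_multiplicative f ->
  (forall (p k : nat), prime p -> (2 <= k)%N -> f (p ^ k)%N = 0) ->
  0 < C ->
  (forall n : nat, (2 <= n)%N -> `|f n| <= C * (n%:R) `^ gamma) ->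
  dirichlet_inverse f finv ->
  forall n : nat, (2 <= n)%N -> `|finv n| <= C ^+ bigOmega n * (n%:R) `^ gamma.
Proof.
move=> fm f0 C0 fb Hinv n n2.
have n0 : (0 < n)%N by apply: leq_trans n2.
rewrite (@inv_unique R f (hh f) finv _ Hinv) //.
- exact: hh_bound.
- by case: fm.
- exact: conv_eps.
Qed.
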